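(* Let $W$ be the Weyl group of a connected reductive group $G$ over $\mathbb{C}$ with respect to a maximal torus $T$, acting on $\mathfrak{t}^*$ by the dot action $w\bullet\lambda=w(\lambda+\rho)-\rho$. Let $\mu_0,\dots,\mu_m\in\mathfrak{t}^*$ and let $\mathfrak{z}_0,\dots,\mathfrak{z}_m\subseteq\mathfrak{t}^*$ be vector subspaces. If $(\mu_0+\mathfrak{z}_0)/(W,\bullet)\subseteq\bigcup_{i=1}^m(\mu_i+\mathfrak{z}_i)/(W,\bullet)$, then there exist $1\le i_0\le m$ and $w_0\in W$ such that $\mathfrak{z}_0\subseteq w_0(\mathfrak{z}_{i_0})$.
   Context: $\rho\in\mathfrak{t}^*$ satisfies $\rho(h_\alpha)=1$ for all simple roots $\alpha$. For $V\subseteq\mathfrak{t}^*$, $V/(W,\bullet)$ denotes the image of $V$ under the quotient map $\mathfrak{t}^*\to\mathfrak{t}^*/(W,\bullet)$. *)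

(* Defs.v *)
(* t^* of a connected reductive group over C is modelled via
   its root datum (X^*(T) = Z^n, X_*(T) = Z^n, roots, coroots), t^* = C^n. *)
From Stdlib Require Import Reals.
From mathcomp Require Import all_boot all_algebra.
From mathcomp Require Import complex.
From mathcomp Require Import Rstruct.

Set Implicit Arguments.
Unset Strict Implicit.
Unset Printing Implicit Defensive.

Import GRing.Theory Num.Theory.
Local Open Scope ring_scope.

Definition C : fieldType := complex R.

(* Perfect pairing X^*(T) x X_*(T) -> Z, characters and cocharacters as rows. *)
Definition dotz (n : nat) (x y : 'rV[int]_n) : int := \sum_(k < n) x 0 k * y 0 k.

Definition pairC (n : nat) (x y : 'rV[C]_n) : C := \sum_(k < n) x 0 k * y 0 k.

Definition reflZ (n : nat) (a ac x : 'rV[int]_n) : 'rV[int]_n := x - (dotz x ac) *: a.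

(* Reduced root datum (X^*, roots rt, X_*, coroots crt), alpha_i^v = crt`_i.
   These are exactly the root data of connected reductive groups over C. *)
Definition is_root_datum (n : nat) (rt crt : seq 'rV[int]_n) : Prop :=
  [/\ size rt = size crt, uniq rt, uniq crt,
      (forall i : nat, (i < size rt)%N -> dotz rt`_i crt`_i = 2) &
   [/\
      (forall i j : nat, (i < size rt)%N -> (j < size rt)%N -> reflZ rt`_i crt`_i rt`_j \in rt),
       (forall i j : nat, (i < size rt)%N -> (j < size rt)%N -> reflZ crt`_i rt`_i crt`_j \in crt)
    & (forall i : nat, (i < size rt)%N -> 2%:Z *: rt`_i \notin rt)]].

Definition intmx (n : nat) (x : 'rV[int]_n) : 'rV[C]_n := map_mx (fun z : int => z%:~R) x.

Definition reflM (n : nat) (a ac : 'rV[int]_n) : 'M[C]_n :=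
  1%:M - (intmx ac)^T *m intmx a.

(* The Weyl group, as the group of linear maps of t^* generated by the
   simple/root reflections (acting on the right on row vectors). *)
Inductive weyl (n : nat) (rt crt : seq 'rV[int]_n) : 'M[C]_n -> Prop :=
| weyl1 : weyl rt crt 1%:M
| weylS i w : (i < size rt)%N -> weyl rt crt w -> weyl rt crt (reflM rt`_i crt`_i *m w).

Definition is_base (n : nat) (rt : seq 'rV[int]_n) (D : seq nat) : Prop :=
  [/\ uniq D, all (fun k => (k < size rt)%N) D,
      free [seq intmx rt`_k | k <- D]
    & forall j : nat, (j < size rt)%N -> exists c : nat -> int,
        rt`_j = \sum_(k <- D) c k *: rt`_k /\
        ((forall k, k \in D -> 0 <= c k) \/ (forall k, k \in D -> c k <= 0))].

Definition dotact (n : nat) (rho : 'rV[C]_n) (w : 'M[C]_n) (lam : 'rV[C]_n) : 'rV[C]_n :=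
  (lam + rho) *m w - rho.

(* Main.v *)
Require Import Defs.
From mathcomp Require Import all_boot all_algebra.
From mathcomp Require Import complex.
From Stdlib Require Import Classical ClassicalEpsilon.
Import GRing.Theory.
Local Open Scope ring_scope.

From mathcomp Require all_classical all_reals all_analysis.
From mathcomp Require Rstruct Rstruct_topology.
Module Unc.
Import all_boot all_algebra all_classical all_reals all_analysis Rstruct Rstruct_topology.
Import GRing.Theory Num.Theory.
Local Open Scope classical_set_scope.
Local Notation R := Rdefinitions.R.
Lemma R_not_enum (f : nat -> R) : exists l : R, forall k, f k <> l.
Proof.
apply: contrapT => /forallNP H.
have HT : [set: R] = range f.
  apply/seteqP; split => x _ //=.
  have := H x => /existsNP [k /contrapT Hk]. by exists k.
have cT : countable [set: R].
  rewrite HT; apply: card_le_trans (card_image_le _ _) _; exact: card_lexx.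
have := countable_lebesgue_measure0 cT.
have := @lebesgue_measure_itv R `[0%R, 1%R]%R.
move=> H1 H0. rewrite /= lte_fin ltr01 in H1.
have : (lebesgue_measure [set` `[0%R, 1%R]%R] <= lebesgue_measure [set: R])%E.
  apply: le_measure => //; rewrite ?inE //.
by rewrite H1 H0 oppr0 adde0 lee_fin ler10.
Qed.
End Unc.

Lemma roots_in_list (p : {poly C}) :
  exists s : seq C, p != 0 -> forall t, root p t -> t \in s.
Proof.
move: {2}(size p) (leqnn (size p)) => k; elim: k p => [|k IH] p Hp.
  by exists [::]; rewrite -size_poly_eq0; move: Hp; rewrite leqn0 => ->.
have [[a ra]|nr] := classic (exists a, root p a); last first.
  by exists [::] => _ t rt; exfalso; apply: nr; exists t.
have [q Hq] := factor_theorem p a ra.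
case: (eqVneq q 0) => [q0|qn0].
  by exists [::]; rewrite Hq q0 mul0r eqxx.
have: (size q <= k)%N.
  move: Hp; rewrite Hq size_mul // ?polyXsubC_eq0 // size_XsubC addn2 /=.
  by [].
move=> /IH [s Hs]; exists (a :: s) => _ t.
rewrite Hq rootM root_XsubC inE => /orP [rq|->]; last by [].
by rewrite (Hs qn0 t rq) orbT.
Qed.

Definition rl (p : {poly C}) : seq C :=
  proj1_sig (constructive_indefinite_description _ (roots_in_list p)).

Lemma rlP p : p != 0 -> forall t, root p t -> t \in rl p.
Proof. rewrite /rl; case: constructive_indefinite_description => s Hs; exact: Hs. Qed.

Definition wprod {n} (rt crt : seq 'rV[int]_n) (s : seq nat) : 'M[C]_n :=
  foldr (fun k acc => reflM rt`_k crt`_k *m acc) 1%:M s.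

Lemma weyl_word {n} (rt crt : seq 'rV[int]_n) w :
  weyl rt crt w -> exists s, w = wprod rt crt s.
Proof.
elim=> [|i w' _ _ [s ->]]; first by exists [::].
by exists (i :: s).
Qed.

Definition Lf {n} (U : {vspace 'rV[C]_n}) : 'End('rV[C]_n) := (\1 - projv U)%VF.

Lemma Lf_mem {n} {U : {vspace 'rV[C]_n}} {v} : v \in U -> Lf U v = 0.
Proof. by move=> vU; rewrite /Lf add_lfunE opp_lfunE id_lfunE projv_id // subrr. Qed.

Lemma Lf_notmem {n} {U : {vspace 'rV[C]_n}} {v} : v \notin U -> exists j, Lf U v 0 j != 0.
Proof.
move=> vU; apply: NNPP => H; move/negP: vU; apply.
have : Lf U v = 0.
  apply/rowP => j; rewrite mxE; apply/eqP; apply: NNPP => Hj.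
  by apply: H; exists j; apply/negP.
rewrite /Lf add_lfunE opp_lfunE id_lfunE => /eqP; rewrite subr_eq0 => /eqP ->.
exact: memv_proj.
Qed.

Definition phi {n} (U : {vspace 'rV[C]_n}) (j : 'I_n) (v : 'rV[C]_n) : C := Lf U v 0 j.

Definition Pol {n} (U : {vspace 'rV[C]_n}) (b : seq 'rV[C]_n) (d : nat) (c : 'rV[C]_n) (j : 'I_n) : {poly C} :=
  \poly_(k < d.+1) (if k is k'.+1 then phi U j b`_k' else - phi U j c).

Definition xc {n} (b : seq 'rV[C]_n) (d : nat) (t : C) : 'rV[C]_n :=
  \sum_(k < d) t ^+ k.+1 *: b`_k.

Lemma Pol_eval {n} U b d c j t : (@Pol n U b d c j).[t] = phi U j (xc b d t - c).
Proof.
rewrite horner_poly big_ord_recl /= expr0 mulr1 /phi /xc.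
have E1 : \sum_(k<d) Lf U (t^+k.+1 *: b`_k) 0 j = \sum_(i<d) Lf U b`_(0+i) 0 j * t^+bump 0 i.
  by apply: eq_bigr => k _; rewrite linearZ /= mxE mulrC add0n /bump leq0n.
rewrite linearB linear_sum /= mxE summxE mxE E1 addrC //.
Qed.

Lemma Pol_neq0 n U b d c j k : (k < d)%N -> phi U j b`_k != 0 -> @Pol n U b d c j != 0.
Proof.
move=> kd nz; apply/eqP => P0; move/eqP: nz; apply.
by have := congr1 (fun p : {poly C} => p`_k.+1) P0; rewrite coef_poly ltnS kd coef0.
Qed.


Theorem lemma5p3 (n : nat) (rt crt : seq 'rV[int]_n) (D : seq nat)
    (rho : 'rV[C]_n) (m : nat) (mu : nat -> 'rV[C]_n)
    (z : nat -> {vspace 'rV[C]_n}) :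
  is_root_datum rt crt ->
  is_base rt D ->
  (forall k, k \in D -> pairC rho (intmx crt`_k) = 1) ->
  (forall x, x \in z 0%N ->
     exists i, (1 <= i <= m)%N /\
       exists w y, [/\ weyl rt crt w, y \in z i & mu 0%N + x = dotact rho w (mu i + y)]) ->
  exists i0, (1 <= i0 <= m)%N /\
    exists w0, weyl rt crt w0 /\
      forall x, x \in z 0%N -> exists y, y \in z i0 /\ x = y *m w0.
Proof.
move=> _ _ _ Hcov.
apply: NNPP => Hng.
pose b : seq 'rV[C]_n := vbasis (z 0%N).
pose d := \dim (z 0%N).
pose Uof i s := (linfun (mulmxr (wprod rt crt s)) @: z i)%VS.
pose cof i s := (mu i + rho) *m wprod rt crt s - rho - mu 0%N.
have K : forall i s, (1 <= i <= m)%N -> weyl rt crt (wprod rt crt s) ->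
    exists2 k, (k < d)%N & b`_k \notin Uof i s.
  move=> i s Hi Hw; apply: NNPP => Hk; apply: Hng; exists i; split => //.
  exists (wprod rt crt s); split => // x Hx.
  have sub : (z 0%N <= Uof i s)%VS.
    rewrite -(span_basis (vbasisP (z 0%N))).
    apply/span_subvP => v /(nthP 0) [k kd <-]; apply: NNPP => Hn; apply: Hk.
    exists k; first by rewrite size_tuple in kd.
    by apply/negP.
  have := subvP sub x Hx => /memv_imgP [y yz ->]; exists y; split => //.
  by rewrite lfunE.
pose g (N : nat) : Rdefinitions.R :=
  match @unpickle (nat * seq nat * 'I_n * nat)%type N with
  | Some (i, s, j, r) => Re (nth 0 (rl (Pol (Uof i s) b d (cof i s) j)) r)
  | None => Rdefinitions.R0
  end.
have [l Hl] := Unc.R_not_enum g.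
pose t : C := Complex l Rdefinitions.R0.
have xz : xc b d t \in z 0%N.
  apply: memv_suml => k _; apply: memvZ; apply: vbasis_mem; apply: memt_nth.
  by [].
have [i [Hi [w [y [Hw Hy Heq]]]]] := Hcov _ xz.
have [s Hs] := @weyl_word _ _ _ _ Hw; subst w.
have [k kd bn] := K i s Hi Hw.
have [j Hj] := Lf_notmem bn.
have Pn : Pol (Uof i s) b d (cof i s) j != 0 := @Pol_neq0 n (Uof i s) b d (cof i s) j k kd Hj.
have rt0 : root (Pol (Uof i s) b d (cof i s) j) t.
  rewrite /root Pol_eval.
  have -> : xc b d t - cof i s = y *m wprod rt crt s.
    have -> : xc b d t = dotact rho (wprod rt crt s) (mu i + y) - mu 0%N.
      by rewrite -Heq (addrC (mu 0%N)) addrK.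
    rewrite /dotact /cof !mulmxDl.
    by apply/eqP; rewrite subr_eq !addrA [y *m _ + _]addrC.
  rewrite /phi Lf_mem ?mxE //.
  by apply/memv_imgP; exists y => //; rewrite lfunE.
have tin := @rlP _ Pn _ rt0.
apply: (Hl (pickle (i, s, j, index t (rl (Pol (Uof i s) b d (cof i s) j))))).
by rewrite /g pickleK /= (nth_index _ tin).
Qed.
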